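(* Let $p>q$ be primes and let $G$ be a transitive permutation group of degree $pq$ containing a transitive subgroup $H$ which is imprimitive with $q$ blocks of size $p$ (i.e. $H$ preserves a partition of the underlying set into $q$ blocks of size $p$). Then $\rho(G)=1$.
   Context: For a permutation group $G$ on a set $V$, two elements $g,h\in G$ are intersecting if $g(v)=h(v)$ for some $v\in V$; a subset $\mathcal{F}\subseteq G$ is intersecting if every pair of its elements is intersecting. The intersection density of $G$ is $\rho(G)=\max\{|\mathcal{F}|:\mathcal{F}\subseteq G \text{ intersecting}\}/\max_{v\in V}|G_v|$, where $G_v$ is the stabilizer of $v$. *)

(* Defs.v *)
From mathcomp Require Import all_boot all_order all_algebra all_fingroup.
Local Open Scope group_scope.
Set Implicit Arguments. Unset Strict Implicit. Unset Printing Implicit Defensive.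

Definition perm_intersecting (T : finType) (g h : {perm T}) : bool :=
  [exists v : T, g v == h v].

Definition intersecting_set (T : finType) (F : {set {perm T}}) : bool :=
  [forall g in F, forall h in F, perm_intersecting g h].

Definition max_intersecting (T : finType) (G : {set {perm T}}) : nat :=
  \max_(F in powerset G | intersecting_set F) #|F|.

Definition max_stabilizer (T : finType) (G : {set {perm T}}) : nat :=
  \max_(v : T) #|'C_G[v | 'P]|.

Definition intersection_density (T : finType) (G : {set {perm T}}) : rat :=
  ((max_intersecting G)%:R / (max_stabilizer G)%:R)%R.

Definition preserves_partition (T : finType) (H : {set {perm T}})
  (P : {set {set T}}) : bool :=
  [forall h in H, forall B in P, ((fun x => h x) @: B) \in P].

(* Main.v *)
Require Import Defs.
From mathcomp Require Import all_boot all_order all_algebra all_fingroup all_solvable.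
Set Implicit Arguments. Unset Strict Implicit. Unset Printing Implicit Defensive.
Local Open Scope group_scope.
Lemma fix_coprime (aT : finGroupType) (rT : finType) (to : {action aT &-> rT})
  (w : aT) (k : nat) (x : rT) :
  coprime #[w] k -> to x (w ^+ k) = x -> to x w = x.
Proof.
move=> cop fx; apply/astab1P.
have gen := generator_coprime w k; rewrite cop /generator in gen.
have: w \in <[w ^+ k]> by rewrite -(eqP gen) cycle_id.
by apply/subsetP; rewrite cycle_subG; apply/astab1P.
Qed.

Lemma orbit_pelt (aT : finGroupType) (rT : finType) (to : {action aT &-> rT})
  (p : nat) (w : aT) (x : rT) :
  prime p -> p.-elt w -> exists j, #|orbit to <[w]> x| = (p ^ j)%N.
Proof.
move=> pp pw; case: (p_natP pw) => e he.
have: #|orbit to <[w]> x| %| p ^ e by rewrite card_orbit -he /order dvdn_indexg.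
by case/(dvdn_pfactor _ _ pp) => m _ ->; exists m.
Qed.

Lemma orbit_sub (aT : finGroupType) (rT : finType) (to : {action aT &-> rT})
  (w : aT) (B : {set rT}) (u : rT) :
  to^* B w = B -> u \in B -> orbit to <[w]> u \subset B.
Proof.
move=> wB uB; apply/subsetP => z /orbitP [g gw <-].
have : g \in 'C[B | to^*].
  by move: g gw; apply/subsetP; rewrite cycle_subG; apply/astab1P.
move/astab1P => <-; exact: mem_setact.
Qed.

Lemma orbit_fix1 (aT : finGroupType) (rT : finType) (to : {action aT &-> rT})
  (w : aT) (v : rT) : to v w = v -> orbit to <[w]> v = [set v].
Proof.
move=> fv; apply/orbit1P; rewrite afix_cycle; apply/afix1P; exact: fv.
Qed.

Lemma card_bigcup_leq (I T : finType) (A : {set I}) (F : I -> {set T}) :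
  (#|\bigcup_(i in A) F i| <= \sum_(i in A) #|F i|)%N.
Proof.
elim/big_rec2: _ => [|i U s _ IH]; first by rewrite cards0.
by rewrite (leq_trans (leq_card_setU _ _)) // leq_add2l.
Qed.

Lemma stab_index (T : finType) (K : {group {perm T}}) v :
  [transitive K, on [set: T] | 'P] -> (#|'C_K[v | 'P]| * #|T|)%N = #|K|.
Proof.
move=> trK; rewrite -(card_orbit_in_stab 'P v (subsetT K)) mulnC.
by rewrite (atransP trK v (in_setT v)) cardsT.
Qed.

Theorem proposition2p1 (p q : nat) (T : finType)
  (G H : {group {perm T}}) (P : {set {set T}}) :
  prime p -> prime q -> (q < p)%N ->
  #|T| = (p * q)%N ->
  [transitive G, on [set: T] | 'P] ->
  H \subset G ->
  [transitive H, on [set: T] | 'P] ->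
  partition P [set: T] -> #|P| = q -> (forall B : {set T}, B \in P -> #|B| = p) ->
  preserves_partition H P ->
  intersection_density G = 1%R.
Proof.
move=> pp pq qp cardT trG sHG trH partP cardP cardB presP.
case/and3P: partP => /eqP covP triv _.
have inblk v : v \in pblock P v by rewrite mem_pblock covP inE.
have blkP v : pblock P v \in P by apply: pblock_mem; rewrite covP inE.
have presH h C : h \in H -> C \in P -> 'P^*%act C h \in P.
  by move=> hH CP; move/forall_inP: presP => /(_ h hH) /forall_inP /(_ C CP).
have p_gt0 := prime_gt0 pp; have q_gt0 := prime_gt0 pq.
have idxH v : #|H : 'C_H[v | 'P]| = (p * q)%N.
  have := Lagrange (subsetIl H 'C[v | 'P]); rewrite -(stab_index v trH) cardT.
  by move/eqP; rewrite eqn_pmul2l ?cardG_gt0 // => /eqP.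
have [Px sylP] := Sylow_exists p H.
case/and3P: sylP => sPH pgP p'idx.
have pxfix w C : w \in Px -> C \in P -> 'P^*%act C w = C.
  move=> wP CP.
  have [j hj] := orbit_pelt ('P^*) C pp (mem_p_elt pgP wP).
  have sub : orbit 'P^* <[w]> C \subset P.
    apply/subsetP => z /orbitP [g gw <-]; apply: presH => //.
    by move: g gw; apply/subsetP; rewrite cycle_subG (subsetP sPH).
  have : (p ^ j <= q)%N by rewrite -hj -cardP subset_leq_card.
  case: j hj => [|j] hj; last first.
    have pj : 0 < p ^ j by rewrite expn_gt0 p_gt0.
    rewrite expnS => le; have := leq_trans (leq_pmulr p pj) le.
    by rewrite leqNgt qp.
  move=> _; move: hj; rewrite expn0 => /eqP /cards1P [z hz].
  have := mem_orbit 'P^* C (cycle_id w); have := orbit_refl 'P^* <[w]> C.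
  by rewrite hz !inE => /eqP -> /eqP.
have stabPx v : (p * #|'C_Px[v | 'P]| <= #|Px|)%N.
  have eq := card_orbit_in_stab 'P v (subsetT Px).
  have [j hj] : exists j, #|orbit 'P Px v| = (p ^ j)%N.
    have : p.-nat #|orbit 'P Px v| by rewrite card_orbit (pnat_dvd (dvdn_indexg _ _) pgP).
    by case/p_natP => j ->; exists j.
  case: j hj => [|j] hj; last first.
    rewrite -eq hj expnS -mulnA leq_pmul2l //.
    by rewrite leq_pmull // expn_gt0 p_gt0.
  exfalso; rewrite hj expn0 mul1n in eq.
  have sPxv : Px \subset 'C_H[v | 'P].
    have : 'C_Px[v | 'P] == Px by rewrite eqEcard subsetIl eq leqnn.
    move/eqP => e; rewrite subsetI sPH -{1}e subsetIr.
    done.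

  have li := Lagrange_index (subsetIl H 'C[v | 'P]) sPxv.
  move: p'idx; rewrite p'natE // -li idxH -mulnA dvdn_mulr //.
have L1 w C u v : w \in Px -> C \in P -> u \in C -> v \in C -> w v = v -> w u = u.
  move=> wP CP uC vC fv.
  have sub := orbit_sub (pxfix w C wP CP) uC.
  have [j hj] := orbit_pelt 'P u pp (mem_p_elt pgP wP).
  case: j hj => [|j] hj.
    move: hj; rewrite expn0 => /eqP/cards1P [z hz].
    have := mem_orbit 'P u (cycle_id w); have := orbit_refl 'P <[w]> u.
    by rewrite hz !inE => /eqP -> /eqP.
  have hO : orbit 'P <[w]> u = C.
    apply/eqP; rewrite eqEcard sub cardB // hj expnS leq_pmulr //.
    by rewrite expn_gt0 p_gt0.
  have : v \in orbit 'P <[w]> u by rewrite hO.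
  rewrite orbit_sym (@orbit_fix1 _ _ 'P w v) ?inE; last by [].
  by move/eqP => ->.
have [x xP xfree] : exists2 x, x \in Px & forall v, x v != v.
  have [v0 _] : exists v0 : T, v0 \in [set: T].
    by apply/card_gt0P; rewrite cardsT cardT muln_gt0 p_gt0.
  pose rep (C : {set T}) := odflt v0 [pick z in C].
  have repP v : rep (pblock P v) \in pblock P v.
    rewrite /rep; case: pickP => [z //|/(_ v)]; by rewrite inblk.
  set U := [set g in Px | [exists v, g v == v]].
  have sU : U \subset \bigcup_(C in P) 'C_Px[rep C | 'P].
    apply/subsetP => g; rewrite inE => /andP [gP /existsP [v /eqP gv]].
    apply/bigcupP; exists (pblock P v) => //.
    rewrite in_setI gP /=; apply/astab1P.
    exact: (L1 g (pblock P v) _ v gP (blkP v) (repP v) (inblk v) gv).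
  have : (p * #|U| < p * #|Px|)%N.
    apply: (@leq_ltn_trans (q * #|Px|)%N); last by rewrite ltn_pmul2r ?cardG_gt0.
    apply: (leq_trans (leq_mul (leqnn p) (leq_trans (subset_leq_card sU) (card_bigcup_leq _ _)))).
    rewrite big_distrr /= -cardP -sum_nat_const; apply: leq_sum => C _; exact: stabPx.
  rewrite ltn_pmul2l // => ltU.
  have : ~~ (Px \subset U) by apply/negP => /subset_leq_card; rewrite leqNgt ltU.
  case/subsetPn => x xP xU; exists x => // v; apply/negP => /eqP xv.
  by move: xU; rewrite inE xP /=; case/negP; apply/existsP; exists v; rewrite xv.
have [B0 B0P] : exists B0, B0 \in P by apply/card_gt0P; rewrite cardP.
have orbH : orbit 'P^* H B0 = P.
  apply/eqP; rewrite eqEsubset; apply/andP; split.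
    by apply/subsetP => z /orbitP [h hH <-]; exact: presH.
  apply/subsetP => C CP.
  have [v vC] : exists v, v \in C by apply/card_gt0P; rewrite cardB.
  have [u uB] : exists u, u \in B0 by apply/card_gt0P; rewrite cardB.
  have : v \in orbit 'P H u by rewrite (atransP trH u (in_setT u)) inE.
  case/orbitP => h hH huv.
  have e1 : 'P^*%act B0 h = C.
    have hB := presH h B0 hH B0P.
    have vin : v \in 'P^*%act B0 h by rewrite -huv mem_setact.
    by rewrite -(def_pblock triv hB vin) (def_pblock triv CP vC).
  by rewrite -e1 mem_orbit.
have idxB : #|H : 'C_H[B0 | 'P^*]| = q by rewrite -card_orbit orbH cardP.
have [Qy sylQ] := Sylow_exists q H.
case/and3P: sylQ => sQH qgQ q'idx.
have [y yQ yB0] : exists2 y, y \in Qy & 'P^*%act B0 y != B0.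
  have : ~~ (Qy \subset 'C_H[B0 | 'P^*]).
    apply/negP => sQ; have li := Lagrange_index (subsetIl H 'C[B0 | 'P^*]) sQ.
    by move: q'idx; rewrite p'natE // -li idxB dvdn_mulr.
  case/subsetPn => y yQ yn; exists y => //; apply/negP => /eqP e; case/negP: yn.
  by rewrite in_setI (subsetP sQH) //=; apply/astab1P.
have yH : y \in H by apply: (subsetP sQH).
have orbY : orbit 'P^* <[y]> B0 = P.
  have sub : orbit 'P^* <[y]> B0 \subset P.
    apply/subsetP => z /orbitP [g gw <-]; apply: presH => //.
    by move: g gw; apply/subsetP; rewrite cycle_subG.
  have [j hj] := orbit_pelt 'P^* B0 pq (mem_p_elt qgQ yQ).
  case: j hj => [|j] hj.
    move: hj; rewrite expn0 => /eqP/cards1P [z hz].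
    have := mem_orbit 'P^* B0 (cycle_id y); have := orbit_refl 'P^* <[y]> B0.
    by rewrite hz !inE => /eqP <- /eqP e; rewrite e eqxx in yB0.
  apply/eqP; rewrite eqEcard sub cardP hj expnS leq_pmulr //.
  by rewrite expn_gt0 q_gt0.
have yfree k C : (0 < k < q)%N -> C \in P -> 'P^*%act C (y ^+ k) != C.
  move=> /andP [k0 kq] CP; apply/negP => /eqP e.
  have cop : coprime #[y] k.
    have [e' he] := p_natP (mem_p_elt qgQ yQ).
    rewrite he; apply: coprimeXl; rewrite prime_coprime //.
    by apply/negP => /(dvdn_leq k0); rewrite leqNgt kq.
  have o1 := orbit_fix1 (fix_coprime cop e).
  have : C \in orbit 'P^* <[y]> B0 by rewrite orbY.
  move/orbit_eqP => eo.
  have : #|orbit 'P^* <[y]> B0| = 1%N by rewrite -eo o1 cards1.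
  by rewrite orbY cardP => q1; rewrite q1 in pq.
have xH : x \in H by apply: (subsetP sPH).
have xfix n C : C \in P -> 'P^*%act C (x ^+ n) = C.
  by move=> CP; apply: pxfix => //; rewrite groupX.
have xpow k v : (0 < k < p)%N -> (x ^+ k) v != v.
  move=> /andP [k0 kp]; apply/negP => /eqP e.
  have cop : coprime #[x] k.
    have [e' he] := p_natP (mem_p_elt pgP xP).
    rewrite he; apply: coprimeXl; rewrite prime_coprime //.
    by apply/negP => /(dvdn_leq k0); rewrite leqNgt kp.
  by have := xfree v; rewrite -apermE (@fix_coprime _ _ 'P x k v cop e) eqxx.
have blkx n u : pblock P ((x ^+ n) u) = pblock P u.
  apply: def_pblock => //; rewrite -{1}(xfix n _ (blkP u)).
  exact: (mem_setact 'P (x ^+ n) (inblk u)).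
have blkh h v : h \in H -> pblock P (h v) = 'P^*%act (pblock P v) h.
  move=> hH; apply: def_pblock => //; first exact: presH.
  exact: (mem_setact 'P h (inblk v)).
have key1 b d a c v : (b < d < q)%N -> (y ^+ b * x ^+ a) v != (y ^+ d * x ^+ c) v.
  move=> /andP [bd dq]; apply/negP => /eqP; rewrite !permM => /(congr1 (pblock P)).
  rewrite !blkx !blkh ?groupX // -(subnKC (ltnW bd)) expgD actM => e.
  have := yfree (d - b)%N ('P^*%act (pblock P v) (y ^+ b)).
  rewrite subn_gt0 bd /= (leq_ltn_trans (leq_subr _ _) dq) presH ?groupX // => /(_ isT isT).
  by rewrite -e eqxx.
have key2 a c u : (a < c < p)%N -> (x ^+ a) u != (x ^+ c) u.
  move=> /andP [ac cp]; rewrite -(subnKC (ltnW ac)) expgD permM eq_sym.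
  apply: xpow; rewrite subn_gt0 ac /=; exact: (leq_ltn_trans (leq_subr _ _) cp).
pose s (i : 'I_q * 'I_p) := y ^+ i.1 * x ^+ i.2.
have sder i j v : i != j -> s i v != s j v.
  case: i => b a; case: j => d c; rewrite /s /= xpair_eqE.
  case: (ltngtP b d) => [bd _|db _|bd].
  - by apply: key1; rewrite bd ltn_ord.
  - by rewrite eq_sym; apply: key1; rewrite db ltn_ord.
  - have -> : b = d by apply: ord_inj.
    rewrite eqxx /= !permM => ac.
    case: (ltngtP a c) => [lac|lca|eac].
    + by apply: key2; rewrite lac ltn_ord.
    + by rewrite eq_sym; apply: key2; rewrite lca ltn_ord.
    + by move: ac; rewrite (ord_inj eac) eqxx.
have Fbound (F : {set {perm T}}) : F \subset G -> intersecting_set F -> (#|F| * (p * q) <= #|G|)%N.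
  move=> sFG iF.
  pose D := setX [set: 'I_q * 'I_p] F.
  pose phi (z : ('I_q * 'I_p) * {perm T}) := (s z.1)^-1 * z.2.
  have inj : {in D &, injective phi}.
    move=> [i f] [j g]; rewrite !inE /= => fF gF; rewrite /phi /= => e.
    case: (eqVneq i j) => [eij|nij].
      by subst; move: e => /mulgI ->.
    exfalso; move/forall_inP: iF => /(_ f fF) /forall_inP /(_ g gF) /existsP [v /eqP fv].
    have ef : f = s i * ((s i)^-1 * f) by rewrite mulKVg.
    have eg : g = s j * ((s j)^-1 * g) by rewrite mulKVg.
    move: fv; rewrite ef eg -e !(permM (s _) ((s i)^-1 * f)) => /perm_inj siv.
    by have := sder i j v nij; rewrite siv eqxx.
  have sub : phi @: D \subset G.
    apply/subsetP => _ /imsetP [[i f] zD ->]; rewrite /phi /=.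
    move: zD; rewrite inE /= => fF.
    rewrite !inE /= in fF; apply: groupM; last exact: (subsetP sFG).
    rewrite groupV /s; apply: groupM; apply: groupX; apply: (subsetP sHG) => //.
  have := subset_leq_card sub; rewrite card_in_imset // cardsX cardsT card_prod !card_ord.
  by rewrite mulnC (mulnC q).
have [v0 _] : exists v0 : T, v0 \in [set: T].
  by apply/card_gt0P; rewrite cardsT cardT muln_gt0 p_gt0.
have pq_gt0 : (0 < p * q)%N by rewrite muln_gt0 p_gt0.
have stabG v : (#|'C_G[v | 'P]| * (p * q))%N = #|G| by rewrite -cardT stab_index.
have stabn v : #|'C_G[v | 'P]| = #|'C_G[v0 | 'P]|.
  by apply/eqP; rewrite -(eqn_pmul2r pq_gt0) !stabG.
have ms : max_stabilizer G = #|'C_G[v0 | 'P]|.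
  rewrite /max_stabilizer; apply/eqP; rewrite eqn_leq; apply/andP; split.
    by apply/bigmax_leqP => v _; rewrite stabn.
  by rewrite (bigD1 v0) //= leq_maxl.
have mi : max_intersecting G = #|'C_G[v0 | 'P]|.
  rewrite /max_intersecting; apply/eqP; rewrite eqn_leq; apply/andP; split.
    apply/bigmax_leqP => F /andP [FG iF]; rewrite powersetE in FG.
    by rewrite -(leq_pmul2r pq_gt0) stabG Fbound.
  apply: (leq_bigmax_cond ('C_G[v0 | 'P])); rewrite powersetE subsetIl /=.
  apply/forall_inP => g gS; apply/forall_inP => h hS; apply/existsP; exists v0.
  move: gS hS; rewrite !inE !sub1set !inE /= !apermE => /andP [_ /eqP ->] /andP [_ /eqP ->].
  by [].
rewrite /intersection_density mi ms GRing.divff // Num.Theory.pnatr_eq0 -lt0n cardG_gt0.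
all: by [].
Qed.
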